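(* For $\mathsf{BST}^{\otimes}$-conjunctions, finite satisfiability and hereditarily finite satisfiability are equivalent: a $\mathsf{BST}^{\otimes}$-conjunction has a finite model if and only if it has a hereditarily finite model. Moreover, a $\mathsf{BST}^{\otimes}$-conjunction with $n$ variables is (hereditarily) finitely satisfiable if and only if it is fulfilled by an accessible $\otimes$-graph of size at most $2^{n}-1$ that admits a topological $\otimes$-order.
   Context: Sets range over the von Neumann universe of well-founded sets; $\mathsf{HF}$ denotes the set of hereditarily finite sets. For sets $s,t$, $s\otimes t=\{\{u,v\} : u\in s,\ v\in t\}$. A set assignment $M$ maps variables to sets; it satisfies a formula if the formula is true when each variable $v$ is interpreted as $Mv$. A $\mathsf{BST}^{\otimes}$-conjunction is a finite conjunction of literals of the forms $x=y\cup z$, $x=y\setminus z$, $x=y\otimes z$, $x\neq y$ ($x,y,z$ set variables). It is finitely (resp. hereditarily finitely) satisfiable if it is satisfied by some set assignment $M$ on its variables with $\bigcup_v Mv$ finite (resp. $\bigcup_v Mv\in\mathsf{HF}$). A $\otimes$-graph $\mathcal G=(\mathcal P,\mathcal N,\mathcal T)$ consists of a set $\mathcal P$ of places, the set of nodes $\mathcal N=\mathcal P\otimes\mathcal P$ (the nonempty subsets of $\mathcal P$ with at most two elements), $\mathcal P\cap\mathcal N=\emptyset$, and a target map $\mathcal T:\mathcal N\to\mathcal P(\mathcal P)$. Size of $\mathcal G$ is $|\mathcal P|$. A source place is a place belonging to no $\mathcal T(A)$; a node $A$ is a $\otimes$-node if $\mathcal T(A)\neq\emptyset$. The accessible places form the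 smallest set of places containing all source places and containing $\mathcal T(A)$ whenever all places of $A$ belong to it; $\mathcal G$ is accessible if every place is accessible. A topological $\otimes$-order of $\mathcal G$ is a total order $\prec$ on $\mathcal P$ such that $\max_\prec A\prec\max_\prec\mathcal T(A)$ for every $\otimes$-node $A$. A map $\mathfrak F:\mathrm{Vars}(\Phi)\to\mathcal P(\mathcal P)$ is $\mathcal G$-fulfilling for $\Phi$ if: (a) $\mathfrak F(x)=\mathfrak F(y)\star\mathfrak F(z)$ for each conjunct $x=y\star z$, $\star\in\{\cup,\setminus\}$; (b) $\mathfrak F(x)\neq\mathfrak F(y)$ for each conjunct $x\neq y$; (c) for each conjunct $x=y\otimes z$: (c1) $\emptyset\neq\mathcal T(\{\upsilon,\zeta\})\subseteq\mathfrak F(x)$ for all $\upsilon\in\mathfrak F(y),\zeta\in\mathfrak F(z)$; (c2) $\mathfrak F(x)\subseteq\bigcup\{\mathcal T(A):A\in\mathfrak F(y)\otimes\mathfrak F(z)\}$; (c3) $\bigcup\{\mathcal T(A):A\in\mathcal N\setminus(\mathfrak F(y)\otimes\mathfrak F(z))\}\cap\mathfrak F(x)=\emptyset$. $\mathcal G$ fulfills $\Phi$ if such a map exists. *)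

(* Defs.v *)
From Stdlib Require List.
From mathcomp Require Import all_boot.
Set Implicit Arguments.
Unset Strict Implicit.
Unset Printing Implicit Defensive.

(* Well-founded sets: Aczel's model (sets as well-founded trees, with  *)
(* extensional equality given by bisimulation).                        *)
Inductive ZSet : Type := sup : forall (A : Type), (A -> ZSet) -> ZSet.

Definition zdom (x : ZSet) : Type := let: sup A _ := x in A.
Definition zelt (x : ZSet) : zdom x -> ZSet :=
  match x return zdom x -> ZSet with sup _ f => f end.

Fixpoint zeq (x y : ZSet) {struct x} : Prop :=
  match x with
  | sup A f => match y with
    | sup B g => (forall a, exists b, zeq (f a) (g b)) /\
                 (forall b, exists a, zeq (f a) (g b))
    end
  end.

Definition zin (w x : ZSet) : Prop := exists a : zdom x, zeq w (zelt a).

Definition zempty : ZSet := sup (fun e : Empty_set => match e with end).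

Definition zunion2 (x y : ZSet) : ZSet :=
  sup (fun c : zdom x + zdom y =>
         match c with inl a => zelt a | inr b => zelt b end).

Definition zbigunion (l : seq ZSet) : ZSet := foldr zunion2 zempty l.

Definition zfinite (x : ZSet) : Prop :=
  exists l : seq ZSet, forall w, zin w x <-> exists2 y, List.In y l & zeq w y.

Inductive zHF : ZSet -> Prop :=
  zHF_intro (x : ZSet) (l : seq ZSet) :
    (forall y, List.In y l -> zHF y) ->
    (forall w, zin w x <-> exists2 y, List.In y l & zeq w y) ->
    zHF x.

Inductive literal : Type :=
  | LUnion  of nat & nat & nat   (* x = y \cup z   *)
  | LDiff   of nat & nat & nat   (* x = y \ z      *)
  | LTensor of nat & nat & nat   (* x = y (x) z    *)
  | LNeq    of nat & nat.        (* x <> y         *)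

Definition bst_conj := seq literal.

Definition lit_vars (l : literal) : seq nat :=
  match l with
  | LUnion x y z | LDiff x y z | LTensor x y z => [:: x; y; z]
  | LNeq x y => [:: x; y]
  end.

Definition vars (phi : bst_conj) : seq nat := undup (flatten (map lit_vars phi)).

Definition zis_pair (w u v : ZSet) : Prop :=
  forall t, zin t w <-> (zeq t u \/ zeq t v).

Definition lit_sat (M : nat -> ZSet) (l : literal) : Prop :=
  match l with
  | LUnion x y z => zeq (M x) (zunion2 (M y) (M z))
  | LDiff x y z => forall w, zin w (M x) <-> (zin w (M y) /\ ~ zin w (M z))
  | LTensor x y z => forall w, zin w (M x) <->
        exists u v, [/\ zin u (M y), zin v (M z) & zis_pair w u v]
  | LNeq x y => ~ zeq (M x) (M y)
  end.

Definition satisfies (M : nat -> ZSet) (phi : bst_conj) : Prop :=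
  forall l, List.In l phi -> lit_sat M l.

Definition fin_satisfiable (phi : bst_conj) : Prop :=
  exists M : nat -> ZSet,
    satisfies M phi /\ zfinite (zbigunion (map M (vars phi))).

Definition hf_satisfiable (phi : bst_conj) : Prop :=
  exists M : nat -> ZSet,
    satisfies M phi /\ zHF (zbigunion (map M (vars phi))).

(* (x)-graphs: places form a finite type P; nodes are the nonempty     *)
(* subsets of P with at most two elements; T is the target map (its    *)
(* values on non-nodes are irrelevant).                                *)
Section TGraph.
Variables (P : finType) (T : {set P} -> {set P}).

Definition is_node (A : {set P}) : bool := (0 < #|A| <= 2)%N.

Definition is_tnode (A : {set P}) : bool := is_node A && (T A != set0).

Definition source_place (p : P) : Prop :=
  forall A, is_node A -> p \notin T A.

Definition accessible_place (p : P) : Prop :=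
  forall S : {set P},
    (forall q, source_place q -> q \in S) ->
    (forall A, is_node A -> A \subset S -> T A \subset S) ->
    p \in S.

Definition accessible_graph : Prop := forall p : P, accessible_place p.

Definition strict_total_order (lt : rel P) : Prop :=
  [/\ irreflexive lt, transitive lt & forall x y, x != y -> lt x y || lt y x].

Definition is_max (lt : rel P) (A : {set P}) (m : P) : Prop :=
  m \in A /\ forall a, a \in A -> a != m -> lt a m.

Definition topological_order (lt : rel P) : Prop :=
  strict_total_order lt /\
  forall A, is_tnode A -> forall m1 m2,
    is_max lt A m1 -> is_max lt (T A) m2 -> lt m1 m2.

Definition has_topological_order : Prop := exists lt, topological_order lt.

Definition in_tens (s t A : {set P}) : bool :=
  [exists u in s, exists v in t, A == [set u; v]].

Definition lit_fulfilled (F : nat -> {set P}) (l : literal) : Prop :=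
  match l with
  | LUnion x y z => F x = F y :|: F z
  | LDiff x y z => F x = F y :\: F z
  | LNeq x y => F x <> F y
  | LTensor x y z =>
      [/\ forall u v, u \in F y -> v \in F z ->
             T [set u; v] != set0 /\ T [set u; v] \subset F x,
          F x \subset \bigcup_(A | is_node A && in_tens (F y) (F z) A) T A
        & (\bigcup_(A | is_node A && ~~ in_tens (F y) (F z) A) T A) :&: F x
            = set0]
  end.

Definition fulfilling (phi : bst_conj) (F : nat -> {set P}) : Prop :=
  forall l, List.In l phi -> lit_fulfilled F l.

Definition fulfills (phi : bst_conj) : Prop := exists F, fulfilling phi F.

End TGraph.

(* Main.v *)
Require Import Defs.
From Stdlib Require Import Classical ClassicalEpsilon.
From Stdlib Require PeanoNat.
From mathcomp Require Import all_boot zify.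
Set Implicit Arguments. Unset Strict Implicit. Unset Printing Implicit Defensive.



Definition dec (P : Prop) : bool :=
  if excluded_middle_informative P then true else false.
Lemma decP (P : Prop) : reflect P (dec P).
Proof. rewrite /dec; case: excluded_middle_informative => H; constructor; auto. Qed.

Lemma zeq_refl x : zeq x x.
Proof. elim: x => A f IH /=; split => a; exists a; exact: IH. Qed.

Lemma zeq_sym x y : zeq x y -> zeq y x.
Proof.
elim: x y => A f IH [B g] /= [H1 H2]; split.
- move=> b; case: (H2 b) => a Ha; exists a; exact: IH.
- move=> a; case: (H1 a) => b Hb; exists b; exact: IH.
Qed.

Lemma zeq_trans x y z : zeq x y -> zeq y z -> zeq x z.
Proof.
elim: x y z => A f IH [B g] [C h] /= [H1 H2] [H3 H4]; split.
- move=> a; case: (H1 a) => b Hb; case: (H3 b) => c Hc; exists c; exact: IH Hb Hc.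
- move=> c; case: (H4 c) => b Hb; case: (H2 b) => a Ha; exists a; exact: IH Ha Hb.
Qed.

Lemma zin_eql w w' x : zeq w w' -> zin w x -> zin w' x.
Proof. move=> H [a Ha]; exists a; exact: zeq_trans (zeq_sym H) Ha. Qed.

Lemma zin_eqr w x x' : zeq x x' -> zin w x -> zin w x'.
Proof.
case: x => A f; case: x' => B g /= [H1 _] [a Ha].
case: (H1 a) => b Hb; exists b; exact: zeq_trans Ha Hb.
Qed.

Lemma zin_sup A (f : A -> ZSet) a : zin (f a) (sup f).
Proof. exists a; exact: zeq_refl. Qed.

Lemma zextP x y : zeq x y <-> forall w, zin w x <-> zin w y.
Proof.
split.
- move=> H w; split => Hw; [exact: zin_eqr H Hw | exact: zin_eqr (zeq_sym H) Hw].
- case: x => A f; case: y => B g H /=; split.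
  + move=> a; case: (proj1 (H (f a)) (zin_sup f a)) => b Hb; by exists b.
  + move=> b; case: (proj2 (H (g b)) (zin_sup g b)) => a Ha; exists a; exact: zeq_sym.
Qed.

Lemma zin_union2 w x y : zin w (zunion2 x y) <-> zin w x \/ zin w y.
Proof.
case: x => A f; case: y => B g; split.
- by case=> [[a|b] H]; [left; exists a | right; exists b].
- by case=> [[a H]|[b H]]; [exists (inl a) | exists (inr b)].
Qed.

Lemma zin_empty w : ~ zin w zempty.
Proof. by case=> [[]]. Qed.

Lemma zin_bigunion w l : zin w (zbigunion l) <-> exists2 y, List.In y l & zin w y.
Proof.
elim: l => [|y l IH] /=.
- split; [by move/zin_empty | by case].
- rewrite zin_union2 IH; split.
  + case=> [H|[y' H1 H2]]; [by exists y; auto | by exists y'; auto].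
  + case=> y' [<-|H1] H2; [by left | by right; exists y'].
Qed.

Definition zpair u v := sup (fun b : bool => if b then u else v).

Lemma zpairP u v : zis_pair (zpair u v) u v.
Proof.
move=> t; split; first by case=> [[]] H; auto.
by case=> H; [exists true | exists false].
Qed.

Lemma zis_pair_eq w w' u v : zis_pair w u v -> zis_pair w' u v -> zeq w w'.
Proof. move=> H H'; apply/zextP => t; by rewrite H H'. Qed.

Lemma zis_pair_resp w w' u u' v v' :
  zeq w w' -> zeq u u' -> zeq v v' -> zis_pair w u v -> zis_pair w' u' v'.
Proof.
move=> Hw Hu Hv H t; split => Ht.
- have: zin t w by exact: zin_eqr (zeq_sym Hw) Ht.
  case/H => E; [left; exact: zeq_trans E Hu | right; exact: zeq_trans E Hv].
- apply: zin_eqr Hw _; apply/H.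
  case: Ht => E; [left; exact: zeq_trans E (zeq_sym Hu)
                 | right; exact: zeq_trans E (zeq_sym Hv)].
Qed.

Lemma zis_pair_inj w u v u' v' : zis_pair w u v -> zis_pair w u' v' ->
  (zeq u u' /\ zeq v v') \/ (zeq u v' /\ zeq v u').
Proof.
move=> H H'.
have [a1|a1] : zeq u u' \/ zeq u v' by apply/H'/H; left; exact: zeq_refl.
have [b1|b1] : zeq v u' \/ zeq v v' by apply/H'/H; right; exact: zeq_refl.
- have [c|c] : zeq v' u \/ zeq v' v by apply/H/H'; right; exact: zeq_refl.
  + left; split => //; apply: zeq_trans b1 _.
    exact: zeq_trans (zeq_sym a1) (zeq_sym c).
  + by left; split => //; exact: zeq_sym.
- by left.
have [b1|b1] : zeq v u' \/ zeq v v' by apply/H'/H; right; exact: zeq_refl.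
- by right.
have [c|c] : zeq u' u \/ zeq u' v by apply/H/H'; left; exact: zeq_refl.
- by left; split => //; exact: zeq_sym.
- left; split => //; apply: zeq_trans a1 _.
  exact: zeq_trans (zeq_sym b1) (zeq_sym c).
Qed.

Lemma zno_desc (Q : ZSet -> Prop) :
  (forall y y', zeq y y' -> Q y -> Q y') ->
  (forall y, Q y -> exists y', Q y' /\ zin y' y) -> forall y, ~ Q y.
Proof.
move=> Hr Hd; elim=> A f IH Hy.
case: (Hd _ Hy) => y' [Qy' [a Ha]].
exact: (IH a (Hr _ _ Ha Qy')).
Qed.

Lemma testbit_lt n i : Nat.testbit n i -> i < n.
Proof.
case: n => [|n] H; first by rewrite PeanoNat.Nat.bits_0 in H.
have H1 := PeanoNat.Nat.log2_lt_lin n.+1 (PeanoNat.Nat.lt_0_succ n).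
have : ~ (Nat.log2 n.+1 < i)%coq_nat.
  by move=> /PeanoNat.Nat.bits_above_log2 E; rewrite E in H.
move=> H2; apply/ltP; lia.
Qed.

Fixpoint ackf (k n : nat) : ZSet :=
  match k with
  | 0 => zempty
  | k'.+1 => sup (fun i : {i : 'I_n | Nat.testbit n i} => ackf k' (nat_of_ord (sval i)))
  end.

Definition ack n := ackf n.+1 n.

Lemma ackf_eq k k' n : n < k -> n < k' -> zeq (ackf k n) (ackf k' n).
Proof.
elim: k k' n => [|k IH] [|k'] n //= Hk Hk'; split.
- case=> i Hi; exists (exist _ i Hi); apply: IH; have := ltn_ord i; simpl in *; lia.
- case=> i Hi; exists (exist _ i Hi); apply: IH; have := ltn_ord i; simpl in *; lia.
Qed.

Lemma zin_ack w n : zin w (ack n) <-> exists2 i, Nat.testbit n i & zeq w (ack i).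
Proof.
have E : zin w (ack n) <-> exists a : {i : 'I_n | Nat.testbit n i}, zeq w (ackf n (sval a)) by [].
rewrite E; split.
- case=> [[i Hi] H]; exists (nat_of_ord i) => //; apply: zeq_trans H _; apply: ackf_eq => //=.
- case=> i Hi H; have Hl := testbit_lt Hi.
  exists (exist _ (Ordinal Hl) Hi); apply: zeq_trans H _; apply: ackf_eq => //=; lia.
Qed.

Lemma ack_inj a b : zeq (ack a) (ack b) -> a = b.
Proof.
move: {2}(a + b).+1 (ltnSn (a + b)) => m; elim: m a b => [|m IH] a b // Hm H.
apply: PeanoNat.Nat.bits_inj => i; apply/idP/idP => Hi.
- have : zin (ack i) (ack b) by apply: zin_eqr H _; apply/zin_ack; exists i => //; exact: zeq_refl.
  case/zin_ack => j Hj E; have -> : i = j; last by [].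
  apply: IH E; have := testbit_lt Hi; have := testbit_lt Hj; lia.
- have : zin (ack i) (ack a) by apply: zin_eqr (zeq_sym H) _; apply/zin_ack; exists i => //; exact: zeq_refl.
  case/zin_ack => j Hj E; have -> : i = j; last by [].
  apply: IH E; have := testbit_lt Hi; have := testbit_lt Hj; lia.
Qed.

Lemma InE (T : eqType) (x : T) s : List.In x s <-> x \in s.
Proof. elim: s => [|y s IH] //=; rewrite in_cons IH; split; [case=> [->|->]; rewrite ?eqxx ?orbT // | case/orP=> [/eqP->|]]; auto. Qed.

Lemma zHF_ack n : zHF (ack n).
Proof.
move: {2}n.+1 (ltnSn n) => m; elim: m n => [|m IH] n // Hn.
apply: (zHF_intro (l := map ack [seq i <- iota 0 n | Nat.testbit n i])).
- move=> y /List.in_map_iff [i [<- /InE]]; rewrite mem_filter => /andP [Hi _].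
  apply: IH; have := testbit_lt Hi; lia.
- move=> w; rewrite zin_ack; split.
  + case=> i Hi E; exists (ack i) => //; apply/List.in_map_iff; exists i; split => //.
    by apply/InE; rewrite mem_filter Hi mem_iota /= add0n (testbit_lt Hi).
  + case=> y /List.in_map_iff [i [<- /InE]]; rewrite mem_filter => /andP [Hi _] E.
    by exists i.
Qed.

Fixpoint zlist (s : seq ZSet) : ZSet :=
  if s is y :: s' then zunion2 (sup (fun _ : unit => y)) (zlist s') else zempty.

Lemma zin_zlist w s : zin w (zlist s) <-> exists2 y, List.In y s & zeq w y.
Proof.
elim: s => [|y s IH] /=.
- split; [by move/zin_empty | by case].
- rewrite zin_union2 IH; split.
  + case=> [[u H]|[y' H1 H2]]; [by exists y; auto | by exists y'; auto].
  + case=> y' [<-|H1] H2; [by left; exists tt | by right; exists y'].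
Qed.

Lemma zHF_empty : zHF zempty.
Proof. apply: (zHF_intro (l := [::])) => // w; split; [by move/zin_empty | by case]. Qed.

Lemma zHF_union x y : zHF x -> zHF y -> zHF (zunion2 x y).
Proof.
case=> {}x lx Hx Ex; case=> {}y ly Hy Ey.
apply: (zHF_intro (l := lx ++ ly)).
- by move=> z /List.in_app_iff [] ?; auto.
- move=> w; rewrite zin_union2 Ex Ey; split.
  + case=> [[z H1 H2]|[z H1 H2]]; exists z => //; apply/List.in_app_iff; auto.
  + case=> z /List.in_app_iff [] H1 H2; [left|right]; by exists z.
Qed.

Lemma zHF_single y : zHF y -> zHF (sup (fun _ : unit => y)).
Proof.
move=> H; apply: (zHF_intro (l := [:: y])); first by move=> z [<-|[]].
move=> w; split; first by case=> u E; exists y => //; left.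
by case=> z [<-|[]] E; exists tt.
Qed.

Lemma zHF_zlist s : (forall y, List.In y s -> zHF y) -> zHF (zlist s).
Proof.
elim: s => [|y s IH] H /=; first exact: zHF_empty.
apply: zHF_union; [apply: zHF_single; apply: H; left | apply: IH => z Hz; apply: H; right] => //.
Qed.

Lemma zHF_bigunion l : (forall y, List.In y l -> zHF y) -> zHF (zbigunion l).
Proof.
elim: l => [|y l IH] H /=; first exact: zHF_empty.
apply: zHF_union; [apply: H; left | apply: IH => z Hz; apply: H; right] => //.
Qed.

Lemma zHF_finite x : zHF x -> zfinite x.
Proof. by case=> {}x l _ E; exists l. Qed.



Lemma set2_eq (T : finType) (a b c d : T) : [set a; b] = [set c; d] ->
  (a = c /\ b = d) \/ (a = d /\ b = c).
Proof.
move=> E.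
have Ha : a \in [set c; d] by rewrite -E !inE eqxx.
have Hb : b \in [set c; d] by rewrite -E !inE eqxx orbT.
have Hc : c \in [set a; b] by rewrite E !inE eqxx.
have Hd : d \in [set a; b] by rewrite E !inE eqxx orbT.
move: Ha Hb Hc Hd; rewrite !inE.
by move=> /orP[/eqP?|/eqP?] /orP[/eqP?|/eqP?] /orP[/eqP?|/eqP?] /orP[/eqP?|/eqP?]; subst; auto.
Qed.

Lemma is_node2 (T : finType) (a b : T) : is_node [set a; b].
Proof. by rewrite /is_node cards2; case: (a != b). Qed.

Lemma zis_pair_sym w u v : zis_pair w u v -> zis_pair w v u.
Proof. by move=> H t; rewrite H; tauto. Qed.

Lemma in_map_sig (T : Type) (U : eqType) (f : T -> U) (l : seq T) V :
  V \in map f l -> exists2 y, List.In y l & V = f y.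
Proof.
elim: l => [|y l IH] //=; rewrite in_cons => /orP [/eqP ->|/IH [y' H1 H2]].
- by exists y; auto.
- by exists y'; auto.
Qed.

Lemma map_sig_in (T : Type) (U : eqType) (f : T -> U) (l : seq T) y :
  List.In y l -> f y \in map f l.
Proof. elim: l => [|z l IH] //= [->|H]; rewrite in_cons ?eqxx //.
by rewrite IH ?orbT. Qed.

Lemma big_max_in (T : Type) (P : T -> bool) (F : T -> nat) l y :
  List.In y l -> P y -> F y <= \max_(z <- l | P z) F z.
Proof.
elim: l => [|z l IH] //= [->|H] Hy; rewrite big_cons.
- by rewrite Hy leq_maxl.
- case: (P z); last exact: IH.
  exact: leq_trans (IH H Hy) (leq_maxr _ _).
Qed.

Lemma big_max_att0 (T : Type) (P : T -> bool) (F : T -> nat) l :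
  \max_(z <- l | P z) F z = 0 \/
  exists y, [/\ List.In y l, P y & F y = \max_(z <- l | P z) F z].
Proof.
elim: l => [|z l IH]; first by left; rewrite big_nil.
rewrite big_cons; case Pz: (P z) => /=; last first.
  by case: IH => [->|[y [H1 H2 H3]]]; [left | right; exists y; split; [right | |]].
right; case: IH => [->|[y [H1 H2 H3]]].
  by exists z; split; [left | | rewrite maxn0].
case: (leqP (\max_(z <- l | P z) F z) (F z)) => Hle.
- by exists z; split; [left | |].
- by exists y; split; [right | |].
Qed.

Lemma big_max_att (T : Type) (P : T -> bool) (F : T -> nat) l :
  (exists2 y, List.In y l & P y) ->
  exists y, [/\ List.In y l, P y & F y = \max_(z <- l | P z) F z].
Proof.
move=> [y Hy Py]; case: (big_max_att0 P F l) => [E|//].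
exists y; split => //; rewrite E; apply/eqP; rewrite -leqn0 -E; exact: big_max_in.
Qed.

Section FinToGraph.
Variables (phi : bst_conj) (M : nat -> ZSet).
Hypothesis Hsat : satisfies M phi.
Variable l : seq ZSet.
Hypothesis Hl : forall w, zin w (zbigunion (map M (vars phi))) <->
                          exists2 y, List.In y l & zeq w y.

Local Notation vs := (vars phi).
Local Notation n := (size (vars phi)).
Local Notation U := (zbigunion (map M (vars phi))).

Lemma zin_U w : zin w U <-> exists2 v, v \in vs & zin w (M v).
Proof.
rewrite zin_bigunion; split.
- by case=> y /List.in_map_iff [v [<- /InE Hv]] H; exists v.
- case=> v Hv H; exists (M v) => //; apply/List.in_map_iff; exists v; split => //.
  exact/InE.
Qed.

Lemma inU w v : v \in vs -> zin w (M v) -> zin w U.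
Proof. by move=> Hv H; apply/zin_U; exists v. Qed.

Lemma lit_vars_in lt x : List.In lt phi -> x \in lit_vars lt -> x \in vs.
Proof.
move=> Hl' Hx; rewrite mem_undup; apply/flattenP; exists (lit_vars lt) => //.
exact: map_sig_in.
Qed.

Definition sig (w : ZSet) : {set 'I_n} :=
  [set i : 'I_n | dec (zin w (M (nth 0 vs i)))].

Lemma sig_eq w w' : zeq w w' -> sig w = sig w'.
Proof.
move=> E; apply/setP => i; rewrite !inE; apply/decP/decP => H;
  [exact: zin_eql E H | exact: zin_eql (zeq_sym E) H].
Qed.

Definition Pl : finType := {V : {set 'I_n} | V \in map sig l}.

Definition reg w (p : Pl) := zin w U /\ sig w = val p.

Lemma reg_ex w : zin w U -> exists p : Pl, reg w p.
Proof.
move=> Hw; case/Hl: (Hw) => y Hy E.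
have Hm : sig w \in map sig l by rewrite (sig_eq E); exact: map_sig_in.
by exists (exist _ (sig w) Hm).
Qed.

Lemma reg_uniq w p q : reg w p -> reg w q -> p = q.
Proof. by move=> [_ E1] [_ E2]; apply: val_inj; rewrite -E1 -E2. Qed.

Lemma reg_resp w w' p : zeq w w' -> reg w p -> reg w' p.
Proof. by move=> E [Hw Es]; split; [exact: zin_eql E Hw | rewrite -(sig_eq E)]. Qed.

Lemma reg_ne (p : Pl) : exists w, reg w p.
Proof.
case: p => V HV; case/in_map_sig: (HV) => y Hy E; exists y; split => //.
apply/Hl; exists y => //; exact: zeq_refl.
Qed.

Definition F (v : nat) : {set Pl} :=
  [set p : Pl | [exists i : 'I_n, (nth 0 vs i == v) && (i \in val p)]].

Lemma keyF w p v : v \in vs -> reg w p -> (zin w (M v) <-> p \in F v).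
Proof.
move=> Hv [_ E]; rewrite inE; split.
- move=> H; apply/existsP; have Hi : index v vs < n by rewrite index_mem.
  exists (Ordinal Hi); rewrite /= nth_index // eqxx /= -E inE; apply/decP.
  by rewrite nth_index.
- case/existsP => i /andP [/eqP Ei]; rewrite -E inE => /decP; by rewrite Ei.
Qed.

Lemma tensP x y z : List.In (LTensor x y z) phi -> forall w, zin w (M x) <->
   exists u v, [/\ zin u (M y), zin v (M z) & zis_pair w u v].
Proof. move=> H; exact: (Hsat H). Qed.

Lemma tens_vars x y z : List.In (LTensor x y z) phi ->
  [/\ x \in vs, y \in vs & z \in vs].
Proof. by move=> H; split; apply: (lit_vars_in H); rewrite !inE eqxx ?orbT. Qed.

Definition wit (A : {set Pl}) (r : Pl) := exists x y z u v w pu pv,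
  List.In (LTensor x y z) phi /\ zin u (M y) /\ zin v (M z) /\ zin w (M x) /\
  zis_pair w u v /\ reg u pu /\ reg v pv /\ A = [set pu; pv] /\ reg w r.

Definition TT (A : {set Pl}) : {set Pl} := [set r | dec (wit A r)].

Lemma acc_all : accessible_graph TT.
Proof.
move=> p S Hsrc Hcl.
suff H : forall w q, reg w q -> q \in S by case: (reg_ne p) => w Hw; exact: H Hw.
elim=> A f IH q Hq.
case: (classic (exists x y z, List.In (LTensor x y z) phi /\ zin (sup f) (M x))).
- case=> x [y [z [Hin Hw]]]; have [Hx Hy Hz] := tens_vars Hin.
  case/(tensP Hin): (Hw) => u [v [Hu Hv Hp]].
  case: (reg_ex (inU Hy Hu)) => pu Hpu; case: (reg_ex (inU Hz Hv)) => pv Hpv.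
  have Hsu : pu \in S.
    have: zin u (sup f) by apply/Hp; left; exact: zeq_refl.
    case=> a Ha; apply: (IH a); exact: reg_resp Ha Hpu.
  have Hsv : pv \in S.
    have: zin v (sup f) by apply/Hp; right; exact: zeq_refl.
    case=> a Ha; apply: (IH a); exact: reg_resp Ha Hpv.
  have Hsub : [set pu; pv] \subset S.
    by apply/subsetP => t; rewrite !inE => /orP [] /eqP ->.
  apply: (subsetP (Hcl _ (is_node2 pu pv) Hsub)); rewrite inE; apply/decP.
  by exists x, y, z, u, v, (sup f), pu, pv.
- move=> Hno; apply: Hsrc => B HB; apply/negP; rewrite inE => /decP.
  move=> [x [y [z [u [v [w [pu [pv [Hin [_ [_ [Hw [_ [_ [_ [_ Hwr]]]]]]]]]]]]]]]].
  apply: Hno; exists x, y, z; split => //; have [Hx _ _] := tens_vars Hin.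
  apply/(keyF Hx Hq); apply/(keyF Hx Hwr) => //.
Qed.

Fixpoint D (k : nat) (w : ZSet) : Prop :=
  if k is k'.+1 then forall y, zin y U -> zin y w -> D k' y else False.

Lemma D_resp k w w' : zeq w w' -> D k w -> D k w'.
Proof. case: k => [|k] //= E H y Hy Hyw; apply: H Hy _; exact: zin_eqr (zeq_sym E) Hyw. Qed.

Lemma D_mono k w : D k w -> D k.+1 w.
Proof. elim: k w => [|k IH] w //= H y Hy Hyw; apply: IH; exact: H. Qed.

Lemma D_le k k' w : k <= k' -> D k w -> D k' w.
Proof.
move=> /subnK <-; elim: (k' - k) => [|j IH] //= H.
by rewrite ?addSn; apply: D_mono; apply: IH.
Qed.

Lemma D_ex w : exists k, D k w.
Proof.
elim: w => A f IH.
suff [k Hk] : exists k, forall y, List.In y l -> zin y (sup f) -> D k y.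
  exists k.+1 => y Hy Hyw; case/Hl: Hy => y' Hy' E.
  apply: D_resp (zeq_sym E) _; apply: Hk Hy' _; exact: zin_eql E Hyw.
have : forall l', exists k, forall y, List.In y l' -> zin y (sup f) -> D k y.
  elim=> [|y0 l' [k Hk]]; first by exists 0.
  case: (classic (zin y0 (sup f))) => H0.
  - case: (H0) => a Ha; case: (IH a) => k0 Hk0.
    exists (maxn k k0) => y [<-|Hy] Hyf.
    + apply: D_le (leq_maxr _ _) _; exact: D_resp (zeq_sym Ha) Hk0.
    + apply: D_le (leq_maxl _ _) _; exact: Hk.
  - by exists k => y [<-|Hy] Hyf; [| exact: Hk].
by move=> H; apply: H.
Qed.

Lemma D_exb w : exists k, dec (D k w).
Proof. by case: (D_ex w) => k Hk; exists k; apply/decP. Qed.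

Definition h w := ex_minn (D_exb w).

Lemma h_lt u w : zin u U -> zin u w -> h u < h w.
Proof.
move=> HuU Huw; rewrite /h; case: (ex_minnP (D_exb w)) => k /decP Hk _.
case: k Hk => [//|k] Hk.
case: (ex_minnP (D_exb u)) => k' _ Hm'; apply: Hm'; apply/decP; exact: Hk.
Qed.

Lemma h_resp w w' : zeq w w' -> h w = h w'.
Proof.
move=> E; apply/eqP; rewrite eqn_leq; apply/andP; split; rewrite /h.
- case: (ex_minnP (D_exb w')) => k /decP Hk _; case: (ex_minnP (D_exb w)) => k' _ Hm.
  apply: Hm; apply/decP; exact: D_resp (zeq_sym E) Hk.
- case: (ex_minnP (D_exb w)) => k /decP Hk _; case: (ex_minnP (D_exb w')) => k' _ Hm.
  apply: Hm; apply/decP; exact: D_resp E Hk.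
Qed.

Definition Hp (p : Pl) := \max_(y <- l | dec (reg y p)) h y.

Lemma Hp_ge w p : reg w p -> h w <= Hp p.
Proof.
move=> Hw; case: (Hw) => HwU _; case/Hl: HwU => y Hy E; rewrite (h_resp E).
apply: big_max_in Hy _; apply/decP; exact: reg_resp E Hw.
Qed.

Lemma Hp_att p : exists w, reg w p /\ h w = Hp p.
Proof.
case: (reg_ne p) => w Hw; case/Hl: (proj1 Hw) => y Hy E.
case: (@big_max_att _ (fun y => dec (reg y p)) h l) => [|y' [_ /decP H1 H2]].
- exists y => //; apply/decP; exact: reg_resp E Hw.
- by exists y'.
Qed.

Definition ltP : rel Pl := fun p q =>
  (Hp p < Hp q) || ((Hp p == Hp q) && (enum_rank p < enum_rank q)).

Lemma ltP_sto : strict_total_order ltP.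
Proof.
split.
- by move=> p; rewrite /ltP ltnn eqxx ltnn.
- move=> b a c; rewrite /ltP.
  move: (Hp a) (Hp b) (Hp c) (nat_of_ord (enum_rank a)) (nat_of_ord (enum_rank b))
        (nat_of_ord (enum_rank c)) => ? ? ? ? ? ?; lia.
- move=> x y Hxy; rewrite /ltP.
  have : nat_of_ord (enum_rank x) != enum_rank y.
    by apply: contra Hxy => /eqP /val_inj /enum_rank_inj ->.
  move: (Hp x) (Hp y) (nat_of_ord (enum_rank x)) (nat_of_ord (enum_rank y)) => ? ? ? ?; lia.
Qed.

Lemma ltP_Hp p q : ltP p q -> Hp p <= Hp q.
Proof. rewrite /ltP; lia. Qed.

Lemma topo : topological_order TT ltP.
Proof.
split; first exact: ltP_sto.
move=> A /andP [HA HT] m1 m2 [Hm1A Hm1] [Hm2T Hm2].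
suff [r' Hr'T Hlt] : exists2 r', r' \in TT A & Hp m1 < Hp r'.
  have Hle : Hp r' <= Hp m2.
    case: (eqVneq r' m2) => [->//|Hne]; exact: ltP_Hp (Hm2 _ Hr'T Hne).
  by rewrite /ltP (leq_trans Hlt Hle).
case/set0Pn: HT => r; rewrite inE => /decP.
move=> [x [y [z [u [v [w [pu [pv [Hin [Hu [Hv [Hw [Hp [Hpu [Hpv [EA Hwr]]]]]]]]]]]]]]]].
have [Hx Hy Hz] := tens_vars Hin.
case: (Hp_att m1) => ym [Hym Ehm].
move: (Hm1A); rewrite EA !inE => /orP [] /eqP E1.
- have Hymy : zin ym (M y) by apply/(keyF Hy Hym); rewrite E1; apply/(keyF Hy Hpu).
  have Hw' : zin (zpair ym v) (M x) by apply/(tensP Hin); exists ym, v; split => //; exact: zpairP.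
  case: (reg_ex (inU Hx Hw')) => r' Hr'; exists r'.
  + rewrite inE; apply/decP; exists x, y, z, ym, v, (zpair ym v), m1, pv.
    refine (conj Hin (conj Hymy (conj Hv (conj Hw' (conj (zpairP _ _) (conj Hym (conj Hpv (conj _ Hr')))))))).
    by rewrite E1.
  + rewrite -Ehm; apply: leq_trans (Hp_ge Hr'); apply: h_lt (inU Hy Hymy) _.
    apply/zpairP; left; exact: zeq_refl.
- have Hymz : zin ym (M z) by apply/(keyF Hz Hym); rewrite E1; apply/(keyF Hz Hpv).
  have Hw' : zin (zpair u ym) (M x) by apply/(tensP Hin); exists u, ym; split => //; exact: zpairP.
  case: (reg_ex (inU Hx Hw')) => r' Hr'; exists r'.
  + rewrite inE; apply/decP; exists x, y, z, u, ym, (zpair u ym), pu, m1.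
    refine (conj Hin (conj Hu (conj Hymz (conj Hw' (conj (zpairP _ _) (conj Hpu (conj Hym (conj _ Hr')))))))).
    by rewrite E1.
  + rewrite -Ehm; apply: leq_trans (Hp_ge Hr'); apply: h_lt (inU Hz Hymz) _.
    apply/zpairP; right; exact: zeq_refl.
Qed.


Lemma fulfill : fulfilling TT phi F.
Proof.
move=> lit Hin; have Hv : forall x, x \in lit_vars lit -> x \in vs := fun x => @lit_vars_in lit x Hin.
have Hs := Hsat Hin.
case: lit Hin Hv Hs => [x y z|x y z|x y z|x y] Hin Hv /= Hs.
- have Hx : x \in vs by apply: Hv; rewrite !inE eqxx.
  have Hy : y \in vs by apply: Hv; rewrite !inE eqxx ?orbT.
  have Hz : z \in vs by apply: Hv; rewrite !inE eqxx ?orbT.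
  apply/setP => p; case: (reg_ne p) => w Hw; rewrite in_setU; apply/idP/orP.
  + move/(keyF Hx Hw) => H; have := proj1 (proj1 (zextP _ _) Hs w) H.
    rewrite zin_union2; case => H'; [left; exact/(keyF Hy Hw) | right; exact/(keyF Hz Hw)].
  + case=> H; apply/(keyF Hx Hw); apply/(proj1 (zextP _ _) Hs w); rewrite zin_union2;
      [left; exact/(keyF Hy Hw) | right; exact/(keyF Hz Hw)].
- have Hx : x \in vs by apply: Hv; rewrite !inE eqxx.
  have Hy : y \in vs by apply: Hv; rewrite !inE eqxx ?orbT.
  have Hz : z \in vs by apply: Hv; rewrite !inE eqxx ?orbT.
  apply/setP => p; case: (reg_ne p) => w Hw; rewrite in_setD; apply/idP/andP.
  + move/(keyF Hx Hw)/Hs => [H1 H2]; split; last exact/(keyF Hy Hw).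
    by apply/negP => /(keyF Hz Hw).
  + case=> /negP H2 H1; apply/(keyF Hx Hw)/Hs; split; first exact/(keyF Hy Hw).
    by move/(keyF Hz Hw).
- have [Hx Hy Hz] := tens_vars Hin.
  split.
  + move=> p q Hp Hq; case: (reg_ne p) => u Hu; case: (reg_ne q) => v Hv'.
    have Huy : zin u (M y) by apply/(keyF Hy Hu).
    have Hvz : zin v (M z) by apply/(keyF Hz Hv').
    have Hw : zin (zpair u v) (M x) by apply/Hs; exists u, v; split=> //; exact: zpairP.
    case: (reg_ex (inU Hx Hw)) => r Hr; split.
    * apply/set0Pn; exists r; rewrite inE; apply/decP.
      exists x, y, z, u, v, (zpair u v), p, q.
      exact: (conj Hin (conj Huy (conj Hvz (conj Hw (conj (zpairP _ _) (conj Hu (conj Hv' (conj erefl Hr)))))))).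
    * apply/subsetP => r'; rewrite inE => /decP.
      move=> [x' [y' [z' [u' [v' [w' [pu [pv [Hin' [Hu' [Hv'' [Hw' [Hp' [Hpu [Hpv [EA Hwr]]]]]]]]]]]]]]]].
      apply/(keyF Hx Hwr); apply/Hs.
      case: (set2_eq EA) => [[E1 E2]|[E1 E2]]; subst.
      -- by exists u', v'; split => //; [apply/(keyF Hy Hpu) | apply/(keyF Hz Hpv)].
      -- exists v', u'; split; [apply/(keyF Hy Hpv) => // | apply/(keyF Hz Hpu) => //|].
         exact: zis_pair_sym.
  + apply/subsetP => r Hr; case: (reg_ne r) => w Hw.
    have Hwx : zin w (M x) by apply/(keyF Hx Hw).
    case/Hs: (Hwx) => u [v [Hu Hv' Hp]].
    case: (reg_ex (inU Hy Hu)) => pu Hpu; case: (reg_ex (inU Hz Hv')) => pv Hpv.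
    apply: (subsetP (bigcup_sup [set pu; pv] _)).
    * rewrite is_node2 /=; apply/existsP; exists pu; apply/andP; split.
        exact/(keyF Hy Hpu).
      apply/existsP; exists pv; apply/andP; split => //; exact/(keyF Hz Hpv).
    * rewrite inE; apply/decP; exists x, y, z, u, v, w, pu, pv.
      exact: (conj Hin (conj Hu (conj Hv' (conj Hwx (conj Hp (conj Hpu (conj Hpv (conj erefl Hw)))))))).
  + apply/setP => r; rewrite in_setI in_set0; apply/negP => /andP [/bigcupP [A /andP [HA Hnt] HrA] Hrx].
    move: HrA; rewrite inE => /decP.
    move=> [x' [y' [z' [u' [v' [w' [pu [pv [Hin' [Hu' [Hv'' [Hw' [Hp' [Hpu [Hpv [EA Hwr]]]]]]]]]]]]]]]].
    have Hwx : zin w' (M x) by apply/(keyF Hx Hwr).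
    case/Hs: Hwx => u [v [Hu Hv' Hp]].
    move/negP: Hnt; apply; subst A.
    case: (zis_pair_inj Hp Hp') => [[E1 E2]|[E1 E2]].
    * have Hpu' := reg_resp (zeq_sym E1) Hpu; have Hpv' := reg_resp (zeq_sym E2) Hpv.
      apply/existsP; exists pu; apply/andP; split; first exact/(keyF Hy Hpu').
      apply/existsP; exists pv; apply/andP; split => //; exact/(keyF Hz Hpv').
    * have Hpu' := reg_resp (zeq_sym E2) Hpu; have Hpv' := reg_resp (zeq_sym E1) Hpv.
      apply/existsP; exists pv; apply/andP; split; first exact/(keyF Hy Hpv').
      apply/existsP; exists pu; apply/andP; split; first exact/(keyF Hz Hpu').
      by apply/eqP/setP => t; rewrite !inE orbC.
- have Hx : x \in vs by apply: Hv; rewrite !inE eqxx.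
  have Hy : y \in vs by apply: Hv; rewrite !inE eqxx ?orbT.
  move=> E; apply: Hs; apply/zextP => w; split => H.
  + case: (reg_ex (inU Hx H)) => p Hp; apply/(keyF Hy Hp); rewrite -E; exact/(keyF Hx Hp).
  + case: (reg_ex (inU Hy H)) => p Hp; apply/(keyF Hx Hp); rewrite E; exact/(keyF Hy Hp).
Qed.

Lemma card_Pl : #|Pl| <= 2 ^ n - 1.
Proof.
rewrite card_sig.
have E0 : #|[set: {set 'I_n}]| = 2 ^ n.
  have -> : [set: {set 'I_n}] = powerset [set: 'I_n].
    by apply/setP => V; rewrite powersetE subsetT inE.
  by rewrite card_powerset cardsT card_ord.
have -> : 2 ^ n - 1 = #|[set V : {set 'I_n} | V != set0]|.
  have -> : [set V : {set 'I_n} | V != set0] = [set: {set 'I_n}] :\ set0.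
    by apply/setP => V; rewrite !inE andbT.
  rewrite (cardsD1 set0 [set: {set 'I_n}]) in_setT in E0.
  by rewrite -E0 add1n subn1.
apply: subset_leq_card; apply/subsetP => V HV; rewrite inE.
case/in_map_sig: HV => y Hy ->; apply/set0Pn.
have : zin y U by apply/Hl; exists y => //; exact: zeq_refl.
case/zin_U => v Hv Hyv; have Hi : index v vs < n by rewrite index_mem.
by exists (Ordinal Hi); rewrite inE; apply/decP; rewrite nth_index.
Qed.

End FinToGraph.


Lemma fin_graph phi : fin_satisfiable phi ->
  exists (P : finType) (T : {set P} -> {set P}),
       [/\ (#|P| <= 2 ^ size (vars phi) - 1)%N,
           accessible_graph T,
           has_topological_order T
         & fulfills T phi].
Proof.
case=> M [Hsat [l Hl]].
exists (Pl phi M l), (@TT phi M l); split.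
- exact: card_Pl.
- exact: acc_all.
- by exists (ltP Hl); exact: topo.
- by exists (@F phi M l); exact: fulfill.
Qed.



Lemma node2 (P : finType) (A : {set P}) : is_node A -> exists a b, A = [set a; b].
Proof.
rewrite /is_node => /andP [H1 H2].
have : (#|A| == 1) || (#|A| == 2) by lia.
case/orP => [/cards1P [x ->]|/cards2P [x [y [_ ->]]]]; last by exists x, y.
by exists x, x; rewrite setUid.
Qed.

Lemma In_filter (T : Type) (p : pred T) x s :
  List.In x (filter p s) <-> List.In x s /\ p x.
Proof.
elim: s => [|y s IH] /=; first by split => [|[]].
case Py: (p y) => /=; rewrite ?IH; split.
- by case=> [<-|[]]; auto.
- by case=> [[<-|H] Hx]; auto.
- by case=> H Hx; auto.
- by case=> [[E|H] Hx]; [subst; rewrite Py in Hx | auto].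
Qed.

Lemma In_allpairs (T1 T2 T3 : Type) (f : T1 -> T2 -> T3) s t a b :
  List.In a s -> List.In b t -> List.In (f a b) [seq f x y | x <- s, y <- t].
Proof.
elim: s => [|x s IH] //= [<-|Ha] Hb; apply/List.in_app_iff.
- by left; apply: List.in_map.
- by right; apply: IH.
Qed.

Lemma eqbE m n : Nat.eqb m n = (m == n).
Proof.
apply/idP/idP => [/PeanoNat.Nat.eqb_eq ->|/eqP ->]; [exact: eqxx | exact: PeanoNat.Nat.eqb_refl].
Qed.

Section GraphAux.
Variables (P : finType) (T : {set P} -> {set P}).
Hypothesis Hacc : accessible_graph T.
Variable lt : rel P.
Hypothesis Hlt : topological_order T lt.

Definition src (p : P) := [forall A : {set P}, is_node A ==> (p \notin T A)].

Lemma srcP p : reflect (source_place T p) (src p).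
Proof.
apply: (iffP forallP) => H.
- by move=> A HA; move: (H A); rewrite HA.
- by move=> A; apply/implyP; exact: H.
Qed.

Definition rk (p : P) := #|[set q | lt q p]|.

Lemma rk_lt p q : lt p q -> rk p < rk q.
Proof.
case: Hlt => [[Hirr Htr Htot] _] Hpq; apply: proper_card; apply/properP; split.
- apply/subsetP => r; rewrite !inE => Hr; exact: Htr Hr Hpq.
- by exists p; rewrite !inE ?Hpq ?Hirr.
Qed.

Lemma rk_le_lt p q : rk p <= rk q -> p != q -> lt p q.
Proof.
case: Hlt => [[Hirr Htr Htot] _] Hle Hne.
case/orP: (Htot _ _ Hne) => // /rk_lt; lia.
Qed.

Lemma ismax_rk (A : {set P}) m : m \in A -> (forall a, a \in A -> rk a <= rk m) ->
  is_max lt A m.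
Proof. move=> Hm H; split => // a Ha Hne; apply: rk_le_lt => //; exact: H. Qed.

Lemma exmax (A : {set P}) : A != set0 ->
  exists2 m, m \in A & forall a, a \in A -> rk a <= rk m.
Proof.
case/set0Pn => a0 Ha0; case: (arg_maxnP rk Ha0) => m Hm Hmax.
by exists m => // a Ha; exact: Hmax.
Qed.

Definition taumax A := [pick r in T A | [forall r', (r' \in T A) ==> (rk r' <= rk r)]].
Definition tau (A : {set P}) (d : P) : P := odflt (odflt d [pick r in A]) (taumax A).

Lemma tau_d A d d' : A != set0 -> tau A d = tau A d'.
Proof.
move=> HA; rewrite /tau; case: pickP => [r _|H] //.
by case/set0Pn: HA => x Hx; move: (H x); rewrite Hx.
Qed.

Lemma taumax_spec A : T A != set0 ->
  exists r, [/\ taumax A = Some r, r \in T A & forall r', r' \in T A -> rk r' <= rk r].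
Proof.
move=> HT; rewrite /taumax; case: pickP => [r|H].
  by move=> /andP [Hr /forallP Hm]; exists r; split => // r' Hr'; move: (Hm r'); rewrite Hr'.
case: (exmax HT) => m Hm Hmax; move: (H m) => /=; rewrite Hm /=.
by move/negP; case; apply/forallP => r'; apply/implyP; exact: Hmax.
Qed.

Lemma tau_spec A d : is_tnode T A ->
  tau A d \in T A /\ forall a, a \in A -> rk a < rk (tau A d).
Proof.
case/andP => HA HT; rewrite /tau.
case: (taumax_spec HT) => r [-> Hr Hm] /=.
split => //= a Ha.
have HAn : A != set0 by rewrite -card_gt0; case/andP: HA.
case: (exmax HAn) => m1 Hm1 Hmax1.
have Hism1 := ismax_rk Hm1 Hmax1.
have Hismr : is_max lt (T A) r by apply: ismax_rk.
case: Hlt => _ Htop.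
have := rk_lt (Htop A (introT andP (conj HA HT)) m1 r Hism1 Hismr).
have := Hmax1 a Ha; lia.
Qed.

Fixpoint accs k : {set P} :=
  if k is k'.+1 then accs k' :|: \bigcup_(A | is_node A && (A \subset accs k')) T A
  else [set p | src p].

Lemma accs_mono k k' : k <= k' -> accs k \subset accs k'.
Proof.
move=> /subnK <-; elim: (k' - k) => [|j IH] //=; rewrite ?addSn.
exact: subset_trans IH (subsetUl _ _).
Qed.

Lemma accs_all p : exists k, p \in accs k.
Proof.
have Hlist : forall s : seq P, (forall x, x \in s -> exists k, x \in accs k) ->
    exists k, forall x, x \in s -> x \in accs k.
  elim=> [|y s IH] H; first by exists 0.
  case: (H y (mem_head _ _)) => k1 Hk1.
  case: IH => [x Hx|k2 Hk2]; first by apply: H; rewrite in_cons Hx orbT.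
  exists (maxn k1 k2) => x; rewrite in_cons => /orP [/eqP ->|Hx].
  - exact: (subsetP (accs_mono (leq_maxl _ _))).
  - exact: (subsetP (accs_mono (leq_maxr _ _))) (Hk2 _ Hx).
have : p \in [set q | dec (exists k, q \in accs k)].
  apply: Hacc.
  - by move=> q /srcP Hq; rewrite inE; apply/decP; exists 0; rewrite /= inE.
  - move=> A HA HAS; case: (Hlist (enum A)) => [x|k Hk].
      by rewrite mem_enum => /(subsetP HAS); rewrite inE => /decP.
    apply/subsetP => r Hr; rewrite inE; apply/decP; exists k.+1.
    rewrite /= in_setU; apply/orP; right; apply/bigcupP; exists A => //.
    rewrite HA /=; apply/subsetP => x Hx; apply: Hk; by rewrite mem_enum.
by rewrite inE => /decP.
Qed.

Definition lev p := ex_minn (accs_all p).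

Lemma lev_in p : p \in accs (lev p).
Proof. by rewrite /lev; case: ex_minnP. Qed.

Lemma lev_min p k : p \in accs k -> lev p <= k.
Proof. by rewrite /lev; case: ex_minnP => m _ H /H. Qed.

Lemma lev_src p : src p -> lev p = 0.
Proof. by move=> H; apply/eqP; rewrite -leqn0; apply: lev_min; rewrite /= inE. Qed.

Lemma lev_nsrc r : ~~ src r ->
  exists a b, [/\ r \in T [set a; b], lev a < lev r & lev b < lev r].
Proof.
move=> Hr; have Hin := lev_in r; have Hmin := @lev_min r.
case E : (lev r) Hin Hmin => [|k] Hin Hmin /=.
  by move: Hin; rewrite /= inE (negbTE Hr).
move: Hin; rewrite /= in_setU => /orP [H|].
  by have := Hmin _ H; rewrite ltnn.
case/bigcupP => A /andP [HA HAs] HrA; case: (node2 HA) => a [b EA]; subst A.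
by exists a, b; split => //; rewrite ltnS; apply: lev_min; apply: (subsetP HAs);
  rewrite !inE eqxx ?orbT.
Qed.

Definition pAB r := [pick ab : P * P | ~~ src r && (r \in T [set ab.1; ab.2]) &&
                        (lev ab.1 < lev r) && (lev ab.2 < lev r)].
Definition pA r := if pAB r is Some ab then ab.1 else r.
Definition qA r := if pAB r is Some ab then ab.2 else r.

Lemma pA_spec r : ~~ src r ->
  [/\ r \in T [set pA r; qA r], lev (pA r) < lev r & lev (qA r) < lev r].
Proof.
move=> Hr; rewrite /pA /qA /pAB; case: pickP => [[a b] /= /andP [/andP [/andP [_ H1] H2] H3]|H].
  by [].
case: (lev_nsrc Hr) => a [b [H1 H2 H3]]; move: (H (a, b)) => /=.
by rewrite Hr H1 H2 H3.
Qed.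


Lemma nsrc_lev r : ~~ src r -> 0 < lev r.
Proof. by case/pA_spec => _ H _; apply: leq_ltn_trans H. Qed.

Inductive term := Src of P & nat | Pr of term & term.

Fixpoint teq (t t' : term) : bool :=
  match t, t' with
  | Src s i, Src s' i' => (s == s') && (i == i')
  | Pr a b, Pr c d => (teq a c && teq b d) || (teq a d && teq b c)
  | _, _ => false
  end.

Definition K := #|P|.
Definition idx (r : P) : nat := enum_rank r.

Lemma idx_lt r : idx r < K.
Proof. exact: ltn_ord. Qed.

Lemma idx_inj : injective idx.
Proof. by move=> x y /val_inj /enum_rank_inj. Qed.

Fixpoint coref (f : nat) (r : P) (j : nat) : term :=
  if f is f'.+1 then
    (if src r then Src r j else Pr (coref f' (pA r) (idx r)) (coref f' (qA r) (K + j)))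
  else Src r j.

Definition core r j := coref (lev r) r j.

Lemma coref_stable f f' r j : lev r <= f -> lev r <= f' -> coref f r j = coref f' r j.
Proof.
elim: f f' r j => [|f IH] [|f'] r j //= H H'.
- case Hs: (src r) => //; have := nsrc_lev (negbT Hs); lia.
- case Hs: (src r) => //; have := nsrc_lev (negbT Hs); lia.
- case Hs: (src r) => //; case/pA_spec: (negbT Hs) => _ H1 H2.
  by congr Pr; apply: IH; lia.
Qed.

Lemma core_eq r j : ~~ src r -> core r j = Pr (core (pA r) (idx r)) (core (qA r) (K + j)).
Proof.
move=> Hs; have Hl := nsrc_lev Hs; case/pA_spec: (Hs) => _ H1 H2.
rewrite /core; case E: (lev r) Hl => [//|m] _ /=; rewrite (negbTE Hs).
by congr Pr; apply: coref_stable; lia.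
Qed.

Lemma core_src r j : src r -> core r j = Src r j.
Proof. by move=> Hs; rewrite /core (lev_src Hs). Qed.

Definition pk p q i k :=
  [pick r | [&& ~~ src r, pA r == p, qA r == q, idx r == i & K <= k]].

Lemma pk_spec p q i k r : pk p q i k = Some r ->
  [/\ ~~ src r, pA r = p, qA r = q, idx r = i & K <= k].
Proof.
rewrite /pk; case: pickP => // r' /and5P [H1 /eqP H2 /eqP H3 /eqP H4 H5] [<-].
by split.
Qed.

Definition dpair (o1 o2 : option (P * nat)) : option (P * nat) :=
  match o1, o2 with
  | Some (p, i), Some (q, k) =>
      if pk p q i k is Some r then Some (r, k - K)
      else if pk q p k i is Some r then Some (r, i - K) else None
  | _, _ => None
  end.

Lemma dpair_sym o1 o2 : dpair o1 o2 = dpair o2 o1.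
Proof.
case: o1 o2 => [[p i]|] [[q k]|] //=.
case E1: (pk p q i k) => [r|]; case E2: (pk q p k i) => [r'|] //.
case/pk_spec: E1 => _ _ _ H1 H2; case/pk_spec: E2 => _ _ _ H3 H4.
have := idx_lt r; have := idx_lt r'; lia.
Qed.

Fixpoint dcd t : option (P * nat) :=
  match t with
  | Src s j => if src s then Some (s, j) else None
  | Pr a b => dpair (dcd a) (dcd b)
  end.

Lemma dcd_core r j : dcd (core r j) = Some (r, j).
Proof.
move: {2}(lev r).+1 (ltnSn (lev r)) => m; elim: m r j => [|m IH] r j // Hm.
case Hs: (src r); first by rewrite core_src //= Hs.
case/pA_spec: (negbT Hs) => _ H1 H2.
rewrite core_eq ?Hs //= !IH; try lia.
rewrite /=; case E: (pk (pA r) (qA r) (idx r) (K + j)) => [r'|].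
- by case/pk_spec: E => _ _ _ /idx_inj -> _; rewrite addKn.
- move: E; rewrite /pk; case: pickP => // H _; move: (H r).
  by rewrite Hs !eqxx leq_addr.
Qed.

Fixpoint pl t : P :=
  match dcd t with
  | Some (r, _) => r
  | None => match t with Src s _ => s | Pr a b => tau [set pl a; pl b] (pl a) end
  end.

Lemma pl_dcd t r j : dcd t = Some (r, j) -> pl t = r.
Proof. by case: t => [s i|a b] E; rewrite /= -/dcd ?E //=; move: E => /= ->. Qed.

Lemma pl_core r j : pl (core r j) = r.
Proof. exact: pl_dcd (dcd_core r j). Qed.

Lemma plPr a b : pl (Pr a b) =
  if dcd (Pr a b) is Some (r, _) then r else tau [set pl a; pl b] (pl a).
Proof. by []. Qed.

Definition Lv := \max_(p : P) lev p.
Definition Bd := K * Lv.+1 + 1.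

Fixpoint valid t : bool :=
  match t with
  | Src s i => src s && (i < Bd)
  | Pr a b => [&& valid a, valid b & is_tnode T [set pl a; pl b]]
  end.

Lemma lev_Lv r : lev r <= Lv.
Proof. exact: (leq_bigmax r). Qed.

Lemma valid_core r j : j + K * lev r < Bd -> valid (core r j).
Proof.
move: {2}(lev r).+1 (ltnSn (lev r)) => m; elim: m r j => [|m IH] r j // Hm Hb.
case Hs: (src r); first by rewrite core_src //= Hs; lia.
case/pA_spec: (negbT Hs) => HT H1 H2.
have Hk1 : K * (lev (pA r)).+1 <= K * lev r by rewrite leq_mul2l H1 orbT.
have Hk2 : K * (lev (qA r)).+1 <= K * lev r by rewrite leq_mul2l H2 orbT.
rewrite mulnS in Hk1 Hk2.
rewrite core_eq ?Hs //= !pl_core; apply/and3P; split.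
- apply: IH; first lia; have := idx_lt r; lia.
- apply: IH; lia.
- rewrite /is_tnode is_node2 /=; apply/set0Pn; by exists r.
Qed.

Lemma valid_core0 r : valid (core r 0).
Proof.
apply: valid_core; rewrite /Bd add0n.
have : K * lev r <= K * Lv by rewrite leq_mul2l lev_Lv orbT.
rewrite mulnS; lia.
Qed.

Lemma valid_Pr a b : valid (Pr a b) ->
  [/\ valid a, valid b & pl (Pr a b) \in T [set pl a; pl b]].
Proof.
case/and3P => Ha Hb Htn; split => //.
case E : (dcd (Pr a b)) => [[r j]|]; last first.
  by rewrite plPr E; case: (tau_spec (pl a) Htn).
rewrite (pl_dcd E); move: E => /=.
case Ea: (dcd a) => [[p i]|]; case Eb: (dcd b) => [[q k]|] //=.
rewrite (pl_dcd Ea) (pl_dcd Eb).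
case E1: (pk p q i k) => [r'|].
  case=> <- _; case/pk_spec: E1 => Hs <- <- _ _; by case/pA_spec: Hs.
case E2: (pk q p k i) => [r'|] //.
case=> <- _; case/pk_spec: E2 => Hs <- <- _ _.
case/pA_spec: Hs => H _ _; suff -> : [set qA r'; pA r'] = [set pA r'; qA r'] by [].
by apply/setP => x; rewrite !inE orbC.
Qed.

Lemma valid_src s i : valid (Src s i) -> src s.
Proof. by case/andP. Qed.

Lemma pl_src s i : src s -> pl (Src s i) = s.
Proof. by move=> Hs; apply: (@pl_dcd _ _ i); rewrite /= Hs. Qed.

Fixpoint gen k : seq term :=
  if k is k'.+1 then gen k' ++ [seq Pr a b | a <- gen k', b <- gen k']
  else [seq Src s i | s <- enum P, i <- iota 0 Bd].

Lemma gen_mono k k' t : k <= k' -> List.In t (gen k) -> List.In t (gen k').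
Proof.
move=> /subnK <-; elim: (k' - k) => [|j IH] //= H.
by rewrite ?addSn /=; apply/List.in_app_iff; left; apply: IH.
Qed.

Lemma gen_Pr k a b : List.In a (gen k) -> List.In b (gen k) -> List.In (Pr a b) (gen k.+1).
Proof. by move=> Ha Hb /=; apply/List.in_app_iff; right; apply: In_allpairs. Qed.

Lemma gen_Src s i : i < Bd -> List.In (Src s i) (gen 0).
Proof.
move=> Hi; apply: In_allpairs; apply/InE; first by rewrite mem_enum.
by rewrite mem_iota.
Qed.

Lemma valid_gen_core t r j : valid t -> dcd t = Some (r, j) -> List.In t (gen (lev r)).
Proof.
elim: t r j => [s i|a IHa b IHb] r j.
- case/andP => Hs Hi; rewrite /= Hs => [[<- _]].
  exact: gen_mono (leq0n _) (gen_Src s Hi).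
- case/and3P => Ha Hb _ /=.
  case Ea: (dcd a) => [[p i]|]; case Eb: (dcd b) => [[q k]|] //=.
  have HA := IHa _ _ Ha Ea; have HB := IHb _ _ Hb Eb.
  case E1: (pk p q i k) => [r'|].
    case=> <- _; case/pk_spec: E1 => Hs Ep Eq _ _; case/pA_spec: (Hs) => _ H1 H2.
    rewrite Ep in H1; rewrite Eq in H2.
    rewrite -(prednK (nsrc_lev Hs)); apply: gen_Pr; apply: gen_mono HA || apply: gen_mono HB; lia.
  case E2: (pk q p k i) => [r'|] //.
  case=> <- _; case/pk_spec: E2 => Hs Ep Eq _ _; case/pA_spec: (Hs) => _ H1 H2.
  rewrite Ep in H1; rewrite Eq in H2.
  rewrite -(prednK (nsrc_lev Hs)); apply: gen_Pr; apply: gen_mono HA || apply: gen_mono HB; lia.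
Qed.

Lemma rk_le p : rk p <= K.
Proof. exact: max_card. Qed.

Lemma valid_gen t : valid t -> List.In t (gen (Lv + rk (pl t))).
Proof.
elim: t => [s i|a IHa b IHb] Hv.
- case/andP: (Hv) => Hs Hi; exact: gen_mono (leq0n _) (gen_Src s Hi).
- case E: (dcd (Pr a b)) => [[r j]|].
    apply: gen_mono (valid_gen_core Hv E); have := lev_Lv r; lia.
  case/and3P: (Hv) => Ha Hb Htn.
  rewrite plPr E; case: (tau_spec (pl a) Htn) => _ Hrk.
  have H1 := Hrk (pl a) (set21 _ _); have H2 := Hrk (pl b) (set22 _ _).
  move: (tau _ _) H1 H2 => m H1 H2.
  have -> : Lv + rk m = (Lv + (rk m).-1).+1 by lia.
  apply: gen_Pr; [apply: gen_mono (IHa Ha) | apply: gen_mono (IHb Hb)]; lia.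
Qed.

Definition X := [seq t <- gen (Lv + K) | valid t].

Lemma inX t : List.In t X <-> valid t.
Proof.
rewrite In_filter; split; first by case.
move=> Hv; split => //; apply: gen_mono (valid_gen Hv); have := rk_le (pl t); lia.
Qed.

Definition pc x y := PeanoNat.Nat.setbit (PeanoNat.Nat.setbit 0 x) y.
Definition lc x i := PeanoNat.Nat.setbit (PeanoNat.Nat.setbit (PeanoNat.Nat.setbit (PeanoNat.Nat.setbit 0 0) 1) (2 + x)) (2 + K + i).

Lemma testbit_pc x y m : Nat.testbit (pc x y) m = (m == x) || (m == y).
Proof.
rewrite /pc !PeanoNat.Nat.setbit_eqb PeanoNat.Nat.bits_0 !eqbE orbF orbC.
by rewrite (eq_sym x) (eq_sym y).
Qed.

Lemma testbit_lc x i m : Nat.testbit (lc x i) m = [|| m == 0, m == 1, m == 2 + x | m == 2 + K + i].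
Proof.
rewrite /lc !PeanoNat.Nat.setbit_eqb PeanoNat.Nat.bits_0 !eqbE orbF.
rewrite !(eq_sym _ m); by case: (m == 0); case: (m == 1); case: (m == 2 + x); case: (m == 2 + K + i).
Qed.

Fixpoint code t : nat :=
  match t with
  | Src s i => lc (idx s) i
  | Pr a b => pc (code a) (code b)
  end.

Lemma code_inj t t' : code t = code t' -> teq t t'.
Proof.
have tb : forall n n' m, n = n' -> Nat.testbit n m = Nat.testbit n' m by move=> n n' m ->.
elim: t t' => [s i|a IHa b IHb] [s' i'|c d] /= E.
- have H1 := tb _ _ (2 + idx s) E; have H2 := tb _ _ (2 + K + i) E.
  rewrite !testbit_lc in H1 H2; have := idx_lt s; have := idx_lt s'.
  have Hs : idx s = idx s' -> s = s' by apply: idx_inj.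
  move: H1 H2 Hs; rewrite !eqxx !orbT; move: (idx s) (idx s') => x x'.
  move=> H1 H2 Hs Hx' Hx; apply/andP; split; [apply/eqP; apply: Hs|apply/eqP]; lia.
- have H0 := tb _ _ 0 E; have H1 := tb _ _ 1 E; have H2 := tb _ _ (2 + K + i) E.
  rewrite !testbit_lc !testbit_pc !eqxx ?orbT in H0 H1 H2.
  move: H0 H1 H2; move: (code c) (code d) => u v; lia.
- have H0 := tb _ _ 0 E; have H1 := tb _ _ 1 E; have H2 := tb _ _ (2 + K + i') E.
  rewrite !testbit_lc !testbit_pc !eqxx ?orbT in H0 H1 H2.
  move: H0 H1 H2; move: (code a) (code b) => u v; lia.
- have H1 := tb _ _ (code a) E; have H2 := tb _ _ (code b) E.
  have H3 := tb _ _ (code c) E; have H4 := tb _ _ (code d) E.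
  rewrite !testbit_pc !eqxx ?orbT in H1 H2 H3 H4.
  have : ((code a == code c) && (code b == code d)) || ((code a == code d) && (code b == code c)).
    move: H1 H2 H3 H4; move: (code a) (code b) (code c) (code d) => ? ? ? ?; lia.
  case/orP => /andP [/eqP E1 /eqP E2]; apply/orP; [left|right]; apply/andP; split;
    [exact: IHa | exact: IHb | exact: IHa | exact: IHb].
Qed.

Lemma dcd_teq t t' : teq t t' -> dcd t = dcd t'.
Proof.
elim: t t' => [s i|a IHa b IHb] [s' i'|c d] //=.
- by case/andP => /eqP -> /eqP ->.
- case/orP => /andP [H1 H2]; rewrite (IHa _ H1) (IHb _ H2) //; exact: dpair_sym.
Qed.

Lemma pl_teq t t' : teq t t' -> pl t = pl t'.
Proof.
elim: t t' => [s i|a IHa b IHb] [s' i'|c d] //; first by rewrite /=; case/andP => /eqP -> /eqP ->.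
move=> H; have Hd := dcd_teq (t := Pr a b) (t' := Pr c d) H.
  rewrite !plPr Hd; case: (dcd (Pr c d)) => [[r j]|] //.
  case/orP: H => /andP [H1 H2]; rewrite (IHa _ H1) (IHb _ H2) //.
  rewrite (@tau_d _ (pl d) (pl c)); last by apply/set0Pn; exists (pl d); rewrite !inE eqxx.
  congr tau; apply/setP => x; rewrite !inE orbC //.
Qed.

Variables (phi : bst_conj) (F : nat -> {set P}).
Hypothesis HF : fulfilling T phi F.

Definition Mo v := zlist (map (fun t => ack (code t)) [seq t <- X | pl t \in F v]).

Lemma memMo w v :
  zin w (Mo v) <-> exists t, [/\ valid t, pl t \in F v & zeq w (ack (code t))].
Proof.
rewrite zin_zlist; split.
- by case=> y /List.in_map_iff [t [<- /In_filter [/inX Hv Hp]]] E; exists t.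
- case=> t [Hv Hp E]; exists (ack (code t)) => //; apply/List.in_map_iff.
  by exists t; split => //; apply/In_filter; split => //; exact/inX.
Qed.

Lemma ack_code_eq t t' : zeq (ack (code t)) (ack (code t')) -> pl t = pl t'.
Proof. by move/ack_inj/code_inj/pl_teq. Qed.

Lemma exists_valid p : exists t, valid t /\ pl t = p.
Proof. exists (core p 0); split; [exact: valid_core0 | exact: pl_core]. Qed.

Lemma zis_pair_ack u v : zis_pair (ack (pc u v)) (ack u) (ack v).
Proof.
move=> t; rewrite zin_ack; split.
- by case=> i; rewrite testbit_pc => /orP [] /eqP -> E; [left|right].
- by case=> E; [exists u | exists v]; rewrite ?testbit_pc ?eqxx ?orbT.
Qed.

Lemma sat_Mo : satisfies Mo phi.
Proof.
move=> lit Hin; have := HF Hin; case: lit Hin => [x y z|x y z|x y z|x y] Hin /= Hf.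
- apply/zextP => w; rewrite zin_union2 !memMo; split.
  + case=> t [Hv Hp E]; move: Hp; rewrite Hf in_setU => /orP [H|H]; [left|right]; by exists t.
  + case=> [[t [Hv Hp E]]|[t [Hv Hp E]]]; exists t; split => //; by rewrite Hf in_setU Hp ?orbT.
- move=> w; rewrite !memMo; split.
  + case=> t [Hv Hp E]; move: Hp; rewrite Hf in_setD => /andP [Hz Hy]; split; first by exists t.
    case=> t' [Hv' Hp' E']; have Ept := ack_code_eq (zeq_trans (zeq_sym E) E').
    by rewrite Ept Hp' in Hz.
  + case=> [[t [Hv Hp E]] Hn]; exists t; split => //; rewrite Hf in_setD Hp andbT.
    by apply/negP => Hz; apply: Hn; exists t.
- case: Hf => Hc1 Hc2 Hc3 w; rewrite memMo; split.
  + case=> t [Hv Hp E]; case: t Hv Hp E => [s i|a b] Hv Hp E.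
    * have Hs := valid_src Hv; rewrite pl_src // in Hp.
      case/bigcupP: (subsetP Hc2 _ Hp) => A /andP [HA _] HsA.
      by move/srcP: Hs => Hs; move: (Hs A HA); rewrite HsA.
    * case: (valid_Pr Hv) => Ha Hb HT.
      have Hin_t : in_tens (F y) (F z) [set pl a; pl b].
        case Hn: (in_tens (F y) (F z) [set pl a; pl b]) => //.
        have : pl (Pr a b) \in (\bigcup_(A | is_node A && ~~ in_tens (F y) (F z) A) T A) :&: F x.
          rewrite in_setI Hp andbT; apply/bigcupP; exists [set pl a; pl b] => //.
          by rewrite is_node2 Hn.
        by rewrite Hc3 in_set0.
      case/existsP: Hin_t => p /andP [Hpy /existsP [q /andP [Hqz /eqP EA]]].
      case: (set2_eq EA) => [[E1 E2]|[E1 E2]].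
      -- exists (ack (code a)), (ack (code b)); split.
         ++ by apply/memMo; exists a; split => //; [rewrite E1 | exact: zeq_refl].
         ++ by apply/memMo; exists b; split => //; [rewrite E2 | exact: zeq_refl].
         ++ apply: zis_pair_resp (zeq_sym E) (zeq_refl _) (zeq_refl _) _; exact: zis_pair_ack.
      -- exists (ack (code b)), (ack (code a)); split.
         ++ by apply/memMo; exists b; split => //; [rewrite E2 | exact: zeq_refl].
         ++ by apply/memMo; exists a; split => //; [rewrite E1 | exact: zeq_refl].
         ++ apply: zis_pair_sym; apply: zis_pair_resp (zeq_sym E) (zeq_refl _) (zeq_refl _) _.
            exact: zis_pair_ack.
  + case=> u [v [Hu Hv' Hpair]].
    case/memMo: Hu => a [Ha Hpa Eu]; case/memMo: Hv' => b [Hb Hpb Ev].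
    case: (Hc1 _ _ Hpa Hpb) => HTne HTsub.
    have Hvt : valid (Pr a b) by rewrite /= Ha Hb /is_tnode is_node2 HTne.
    exists (Pr a b); split => //.
    * by apply: (subsetP HTsub); case: (valid_Pr Hvt).
    * apply: zis_pair_eq Hpair _.
      exact: zis_pair_resp (zeq_refl _) (zeq_sym Eu) (zeq_sym Ev) (zis_pair_ack _ _).
- move=> E; apply: Hf; apply/setP => p; case: (exists_valid p) => t [Hv Ep].
  apply/idP/idP => H.
  + have : zin (ack (code t)) (Mo x) by apply/memMo; exists t; split => //; [rewrite Ep | exact: zeq_refl].
    move/(zin_eqr E)/memMo => [t' [Hv' Hp' E']]; by rewrite -Ep (ack_code_eq E').
  + have : zin (ack (code t)) (Mo y) by apply/memMo; exists t; split => //; [rewrite Ep | exact: zeq_refl].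
    move/(zin_eqr (zeq_sym E))/memMo => [t' [Hv' Hp' E']]; by rewrite -Ep (ack_code_eq E').
Qed.

Lemma hf_Mo : zHF (zbigunion (map Mo (vars phi))).
Proof.
apply: zHF_bigunion => y /List.in_map_iff [v [<- _]]; apply: zHF_zlist.
by move=> y' /List.in_map_iff [t [<- _]]; exact: zHF_ack.
Qed.

End GraphAux.

Lemma graph_hf phi :
  (exists (P : finType) (T : {set P} -> {set P}),
       [/\ (#|P| <= 2 ^ size (vars phi) - 1)%N,
           accessible_graph T,
           has_topological_order T
         & fulfills T phi]) -> hf_satisfiable phi.
Proof.
case=> P [T [_ Hacc [lt Hlt] [F HF]]].
exists (Mo Hacc lt F); split; [exact: (@sat_Mo P T Hacc lt Hlt phi F HF) | exact: hf_Mo].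
Qed.

Theorem mainTheorem3 (phi : bst_conj) :
  (fin_satisfiable phi <-> hf_satisfiable phi) /\
  (fin_satisfiable phi <->
     exists (P : finType) (T : {set P} -> {set P}),
       [/\ (#|P| <= 2 ^ size (vars phi) - 1)%N,
           accessible_graph T,
           has_topological_order T
         & fulfills T phi]).
Proof.
have Hhf : hf_satisfiable phi -> fin_satisfiable phi.
  by case=> M [Hs Hh]; exists M; split => //; exact: zHF_finite.
split; split.
- by move=> H; apply: graph_hf; apply: fin_graph.
- exact: Hhf.
- exact: fin_graph.
- by move=> H; apply: Hhf; apply: graph_hf.
Qed.
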